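(* Let $n\ge2$ and let $r_1,\dots,r_N$, $N=3\cdot4^{n-1}$, be the vertices of the Koch snowflake $S_n$ (indices modulo $N$). Then: (i) the sharp points of $S_n$ are exactly the vertices $r_m$ with $m=4^{l}(4k-2)+1$ for $l\in\{0,1,\dots,n-2\}$, $k\in\{1,2,\dots,3\cdot4^{\,n-2-l}\}$, or $m=4^{n-1}(k-1)+1$ for $k\in\{1,2,3\}$; (ii) for the snowflake code $u_n=c_1\cdots c_{6\cdot4^{n-2}}$ and for $S_n$ or any image of $S_n$ under an invertible affine map: if $c_j=1$ then $\kappa_{2j-2}=\kappa_{2j-1}=-1$, $\bar\kappa_{2j-2}=-1$, $\bar\kappa_{2j-1}=1$; if $c_j=0$ then $\kappa_{2j-2}=\kappa_{2j-1}=\bar\kappa_{2j-2}=\bar\kappa_{2j-1}=1$; (iii) $u_2=111111$, and if $u_n=c_1c_2\cdots c_m$ then $u_{n+1}=c_1\,101\,c_2\,101\cdots c_m\,101$ (each letter of $u_n$ followed by the word $101$); in particular $u_3=(1101)^6$ and $u_n$ has $6\cdot4^{n-2}$ letters.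
   Context: Let $R_\theta$ denote counterclockwise rotation of $\mathbb R^2$ by the angle $\theta$. Let $v_1,v_2,v_3$ be the vertices of an equilateral triangle in counterclockwise order. The Koch snowflake at step $n$ is the closed polygon $S_n$ with vertices $r_1,\dots,r_{3\cdot4^{n-1}}$ (indices taken modulo $3\cdot4^{n-1}$, so $r_0$ is the last vertex), defined recursively: $S_1$ has vertices $v_1,v_2,v_3$; $S_{n+1}$ is obtained from $S_n$ by replacing each edge from $p$ to $q$ (including the closing edge from the last vertex to $r_1$), in cyclic order, by the four edges through $p,\ p+\tfrac13(q-p),\ p+\tfrac13(q-p)+\tfrac13R_{-\pi/3}(q-p),\ p+\tfrac23(q-p),\ q$ (the new tip points outward), and numbering vertices consecutively with $r_1=v_1$. A vertex $r_i$ is a sharp point if the angle $\angle r_{i-1}r_ir_{i+1}$ equals $\pi/3$. For $n\ge2$ the snowflake code is the word $u_n=c_1\cdots c_{6\cdot4^{n-2}}$ over $\{0,1\}$ with $c_j=1$ iff $r_{2j-1}$ is a sharp point (the letter $c_j$ refers to the pair $\{r_{2j-2},r_{2j-1}\}$). Affine curvatures of a closed polygon with vertices $r_1,\dots,r_N$ (indices mod $N$): $t_k=r_{k+1}-r_k$, $[a,b]=a_1b_2-a_2b_1$, and whenever $[t_{k-1},t_k]\ne0$, $\kappa_k=\dfrac{[t_k,t_{k+1}]}{[t_{k-1},t_k]}$, $\bar\kappa_k=\dfrac{[t_{k-1},t_{k+1}]}{[t_{k-1},t_k]}$. *)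

(* Defs.v *)
From Stdlib Require Import Reals Lra List ZArith.
Import ListNotations.
Open Scope R_scope.

Definition pt := (R * R)%type.
Definition padd (p q : pt) : pt := (fst p + fst q, snd p + snd q).
Definition psub (p q : pt) : pt := (fst p - fst q, snd p - snd q).
Definition pscale (c : R) (p : pt) : pt := (c * fst p, c * snd p).
Definition dot (a b : pt) : R := fst a * fst b + snd a * snd b.
Definition pnorm (a : pt) : R := sqrt (dot a a).
Definition cross (a b : pt) : R := fst a * snd b - snd a * fst b.

Definition rot (theta : R) (p : pt) : pt :=
  (cos theta * fst p - sin theta * snd p, sin theta * fst p + cos theta * snd p).

(* v1, v2, v3 are the vertices of an equilateral triangle in counterclockwise order *)
Definition equilateral_ccw (v1 v2 v3 : pt) : Prop :=
  v1 <> v2 /\ psub v3 v1 = rot (PI / 3) (psub v2 v1).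

(* the edge p -> q replaced by four edges: vertices p, a, b, c (q starts the next edge) *)
Definition koch_edge (p q : pt) : list pt :=
  let d := psub q p in
  [ p;
    padd p (pscale (1/3) d);
    padd (padd p (pscale (1/3) d)) (pscale (1/3) (rot (- (PI / 3)) d));
    padd p (pscale (2/3) d) ].

(* one refinement step on a closed polygon (list of vertices in cyclic order,
   the closing edge goes from the last vertex to the first) *)
Fixpoint koch_step_aux (first : pt) (l : list pt) : list pt :=
  match l with
  | [] => []
  | [p] => koch_edge p first
  | p :: ((q :: _) as t) => koch_edge p q ++ koch_step_aux first t
  end.

Definition koch_step (l : list pt) : list pt :=
  match l with
  | [] => []
  | p :: _ => koch_step_aux p l
  end.

Definition snowflake (v1 v2 v3 : pt) (n : nat) : list pt :=
  Nat.iter (Nat.pred n) koch_step [v1; v2; v3].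

(* r_i, 1-based, indices taken modulo the number of vertices *)
Definition vert (v1 v2 v3 : pt) (n : nat) (i : Z) : pt :=
  let l := snowflake v1 v2 v3 n in
  nth (Z.to_nat ((i - 1) mod Z.of_nat (length l))) l (0, 0).

Definition angle (a o b : pt) : R :=
  acos (dot (psub a o) (psub b o) / (pnorm (psub a o) * pnorm (psub b o))).

Definition sharp_point (v1 v2 v3 : pt) (n : nat) (i : Z) : Prop :=
  angle (vert v1 v2 v3 n (i - 1)) (vert v1 v2 v3 n i) (vert v1 v2 v3 n (i + 1)) = PI / 3.

Definition sharpb (v1 v2 v3 : pt) (n : nat) (i : Z) : bool :=
  if Req_EM_T (angle (vert v1 v2 v3 n (i - 1)) (vert v1 v2 v3 n i)
                     (vert v1 v2 v3 n (i + 1))) (PI / 3) then true else false.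

Definition code (v1 v2 v3 : pt) (n : nat) : list bool :=
  map (fun j : nat => sharpb v1 v2 v3 n (2 * Z.of_nat j - 1))
      (seq 1 (6 * 4 ^ (n - 2))).

(* invertible affine map p |-> A p + b, A = [[a11 a12];[a21 a22]] *)
Definition affine_map (a11 a12 a21 a22 b1 b2 : R) (p : pt) : pt :=
  (a11 * fst p + a12 * snd p + b1, a21 * fst p + a22 * snd p + b2).

(* affine curvatures of a closed polygon given by its (periodic) vertex function *)
Definition tvec (P : Z -> pt) (k : Z) : pt := psub (P (k + 1)%Z) (P k).
Definition kappa (P : Z -> pt) (k : Z) : R :=
  cross (tvec P k) (tvec P (k + 1)) / cross (tvec P (k - 1)) (tvec P k).
Definition kappabar (P : Z -> pt) (k : Z) : R :=
  cross (tvec P (k - 1)) (tvec P (k + 1)) / cross (tvec P (k - 1)) (tvec P k).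
(* kappa_k and kappabar_k are defined iff this is nonzero *)
Definition kappa_defined (P : Z -> pt) (k : Z) : Prop :=
  cross (tvec P (k - 1)) (tvec P k) <> 0.

Fixpoint repeat_word (w : list bool) (k : nat) : list bool :=
  match k with O => [] | S k' => w ++ repeat_word w k' end.

(* Main.v *)
Require Import Defs.
From Stdlib Require Import Reals Lra Lia List ZArith Psatz.
Import ListNotations.
Open Scope R_scope.

Lemma dm q r : (r < 4)%nat -> ((4*q+r)/4 = q /\ (4*q+r) mod 4 = r)%nat.
Proof. intros. split. symmetry. apply (Nat.div_unique _ _ _ r); lia. symmetry. apply (Nat.mod_unique _ _ q); lia. Qed.

Lemma pt_eq (a b : pt) : fst a = fst b -> snd a = snd b -> a = b.
Proof. destruct a, b; simpl; intros; subst; auto. Qed.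

Lemma rot_add a b p : rot a (rot b p) = rot (a + b) p.
Proof. destruct p as [x y]; unfold rot; simpl; rewrite cos_plus, sin_plus; apply pt_eq; simpl; ring. Qed.

Lemma rot_scale a c p : rot a (pscale c p) = pscale c (rot a p).
Proof. destruct p as [x y]; unfold rot, pscale; simpl; apply pt_eq; simpl; ring. Qed.

Lemma rot0 p : rot 0 p = p.
Proof. destruct p as [x y]; unfold rot; rewrite cos_0, sin_0; apply pt_eq; simpl; ring. Qed.

Lemma sub_rot_m x : psub x (rot (-(PI/3)) x) = rot (PI/3) x.
Proof. destruct x as [x y]; unfold rot, psub; rewrite cos_neg, sin_neg, cos_PI3; apply pt_eq; simpl; field. Qed.

Lemma cross_rot a b x : cross (rot a x) (rot b x) = sin (b - a) * dot x x.
Proof. destruct x as [x y]; unfold rot, cross, dot; rewrite sin_minus; simpl; ring. Qed.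

Lemma dot_rot a b x : dot (rot a x) (rot b x) = cos (b - a) * dot x x.
Proof. destruct x as [x y]; unfold rot, cross, dot; rewrite cos_minus; simpl; ring. Qed.

Lemma cross_scale c x y : cross (pscale c x) (pscale c y) = c * c * cross x y.
Proof. unfold cross, pscale; simpl; ring. Qed.
Lemma dot_scale c x y : dot (pscale c x) (pscale c y) = c * c * dot x y.
Proof. unfold dot, pscale; simpl; ring. Qed.

Definition s3 := sin (PI/3).
Lemma s3_pos : 0 < s3.
Proof. unfold s3; apply sin_gt_0; pose proof PI_RGT_0; lra. Qed.
Lemma cos_m13 : cos (-(PI/3)) = 1/2. Proof. rewrite cos_neg, cos_PI3; lra. Qed.
Lemma sin_m13 : sin (-(PI/3)) = - s3. Proof. rewrite sin_neg; reflexivity. Qed.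
Lemma cos_23 : cos (2 * (PI/3)) = -1/2.
Proof. replace (2*(PI/3)) with (-(PI/3) + PI) by field. rewrite neg_cos, cos_m13; lra. Qed.
Lemma sin_23 : sin (2 * (PI/3)) = s3.
Proof. replace (2*(PI/3)) with (-(PI/3) + PI) by field. rewrite neg_sin, sin_m13; lra. Qed.
Lemma cos_43 : cos (4 * (PI/3)) = -1/2.
Proof. replace (4*(PI/3)) with ((PI/3) + PI) by field. rewrite neg_cos, cos_PI3; lra. Qed.
Lemma sin_43 : sin (4 * (PI/3)) = - s3.
Proof. replace (4*(PI/3)) with ((PI/3) + PI) by field. rewrite neg_sin; reflexivity. Qed.
Lemma cos_m43 : cos (-4 * (PI/3)) = -1/2.
Proof. replace (-4*(PI/3)) with (-(4*(PI/3))) by ring. rewrite cos_neg; apply cos_43. Qed.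
Lemma sin_m43 : sin (-4 * (PI/3)) = s3.
Proof. replace (-4*(PI/3)) with (-(4*(PI/3))) by ring. rewrite sin_neg, sin_43; ring. Qed.
Lemma cos_m13' : cos (-1 * (PI/3)) = 1/2.
Proof. replace (-1*(PI/3)) with (-(PI/3)) by ring. apply cos_m13. Qed.
Lemma sin_m13' : sin (-1 * (PI/3)) = - s3.
Proof. replace (-1*(PI/3)) with (-(PI/3)) by ring. apply sin_m13. Qed.

Lemma ksa_cons first p t : koch_step_aux first (p :: t) = koch_edge p (hd first t) ++ koch_step_aux first t.
Proof. destruct t; reflexivity. Qed.

Lemma ke_len p q : length (koch_edge p q) = 4%nat. Proof. reflexivity. Qed.

Lemma ksa_len first l : length (koch_step_aux first l) = (4 * length l)%nat.
Proof. induction l as [|p t IH]; [reflexivity|]. rewrite ksa_cons, length_app, ke_len, IH; simpl; lia. Qed.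

Lemma ksa_nth first l d : forall i r, (i < length l)%nat -> (r < 4)%nat ->
  nth (4*i + r) (koch_step_aux first l) d = nth r (koch_edge (nth i l d) (nth (S i) l first)) d.
Proof.
  induction l as [|p t IH]; intros i r Hi Hr; simpl in Hi; [lia|].
  rewrite ksa_cons. destruct i as [|i].
  - rewrite app_nth1 by (rewrite ke_len; lia). simpl. destruct t; reflexivity.
  - rewrite app_nth2 by (rewrite ke_len; lia). rewrite ke_len.
    replace (4 * S i + r - 4)%nat with (4*i+r)%nat by lia. rewrite IH by lia. reflexivity.
Qed.

Definition nxt (N e : nat) := if Nat.eqb (S e) N then 0%nat else S e.

Lemma ks_len l : length (koch_step l) = (4 * length l)%nat.
Proof. destruct l; [reflexivity|]. apply ksa_len. Qed.

Lemma ks_nth l d i r : (i < length l)%nat -> (r < 4)%nat ->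
  nth (4*i + r) (koch_step l) d = nth r (koch_edge (nth i l d) (nth (nxt (length l) i) l d)) d.
Proof.
  intros Hi Hr. destruct l as [|p t]; [simpl in Hi; lia|].
  unfold koch_step. rewrite ksa_nth by assumption. f_equal. f_equal.
  unfold nxt. destruct (Nat.eqb_spec (S i) (length (p::t))) as [E|E].
  - rewrite E, nth_overflow by lia. reflexivity.
  - apply nth_indep. lia.
Qed.

Definition delta (r : nat) : Z := match r with 1%nat => (-1)%Z | 2%nat => 1%Z | _ => 0%Z end.
Fixpoint dir (m e : nat) : Z :=
  match m with O => (2 * Z.of_nat e)%Z | S m' => (dir m' (e / 4) + delta (e mod 4))%Z end.
Fixpoint sh (m e : nat) : bool :=
  match m with O => true | S m' =>
    match (e mod 4)%nat with 0%nat => sh m' (e / 4) | 2%nat => true | _ => false end end.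
Lemma dir_S m e : dir (S m) e = (dir m (e / 4) + delta (e mod 4))%Z. Proof. reflexivity. Qed.
Lemma sh_S m e : sh (S m) e = match (e mod 4)%nat with 0%nat => sh m (e / 4) | 2%nat => true | _ => false end.
Proof. reflexivity. Qed.

Lemma dir0 m : dir m 0 = 0%Z. Proof. induction m; simpl; auto. rewrite IHm; reflexivity. Qed.
Lemma sh0 m : sh m 0 = true. Proof. induction m; simpl; auto. Qed.

Lemma dir_last m : dir m (3 * 4 ^ m - 1) = 4%Z.
Proof.
  induction m. reflexivity.
  assert (H4 : (0 < 4 ^ m)%nat) by (apply Nat.neq_0_lt_0, Nat.pow_nonzero; lia).
  replace (3 * 4 ^ S m - 1)%nat with (4 * (3*4^m-1) + 3)%nat by (simpl; lia).
  rewrite dir_S. destruct (dm (3*4^m-1) 3) as [-> ->]; [lia|]. rewrite IHm. reflexivity.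
Qed.

Lemma turn m e : (dir m (S e) - dir m e = if sh m (S e) then 2 else -1)%Z.
Proof.
  revert e. induction m; intro e.
  - cbn [dir sh]. rewrite Nat2Z.inj_succ. lia.
  - rewrite !dir_S, sh_S.
    pose proof (Nat.div_mod (S e) 4 ltac:(lia)) as Hd.
    pose proof (Nat.mod_upper_bound (S e) 4 ltac:(lia)) as Hb.
    remember (S e / 4)%nat as q. remember (S e mod 4)%nat as r.
    destruct r as [|[|[|[|r]]]]; try lia.
    + assert (Hq : (q = S (q - 1))%nat) by lia.
      replace e with (4 * (q-1) + 3)%nat by lia.
      destruct (dm (q-1) 3) as [-> ->]; [lia|].
      pose proof (IHm (q-1)%nat) as IH. rewrite <- Hq in IH. simpl delta. rewrite Heqq. rewrite <- Heqq. lia.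
    + replace e with (4 * q + 0)%nat by lia. destruct (dm q 0) as [-> ->]; [lia|]. simpl. lia.
    + replace e with (4 * q + 1)%nat by lia. destruct (dm q 1) as [-> ->]; [lia|]. simpl. lia.
    + replace e with (4 * q + 2)%nat by lia. destruct (dm q 2) as [-> ->]; [lia|]. simpl. lia.
Qed.

Lemma sh_odd m a : sh (S m) (2 * a + 1) = false.
Proof.
  rewrite sh_S.
  pose proof (Nat.div_mod (2*a+1) 4 ltac:(lia)) as Hd.
  pose proof (Nat.mod_upper_bound (2*a+1) 4 ltac:(lia)) as Hb.
  destruct ((2*a+1) mod 4)%nat as [|[|[|[|r]]]]; try lia; reflexivity.
Qed.

Definition Lm (v1 v2 v3 : pt) m := Nat.iter m koch_step [v1;v2;v3].
Definition ang (z : Z) := IZR z * (PI / 3).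

Lemma alg0 p q : psub (padd p (pscale (1/3) (psub q p))) p = pscale (1/3) (psub q p).
Proof. apply pt_eq; unfold psub, padd, pscale; simpl; ring. Qed.
Lemma alg1 p q : psub (padd (padd p (pscale (1/3) (psub q p))) (pscale (1/3) (rot (-(PI/3)) (psub q p))))
   (padd p (pscale (1/3) (psub q p))) = pscale (1/3) (rot (-(PI/3)) (psub q p)).
Proof. apply pt_eq; unfold psub, padd, pscale; simpl; ring. Qed.
Lemma alg2 p q : psub (padd p (pscale (2/3) (psub q p)))
  (padd (padd p (pscale (1/3) (psub q p))) (pscale (1/3) (rot (-(PI/3)) (psub q p))))
  = pscale (1/3) (rot (PI/3) (psub q p)).
Proof. rewrite <- sub_rot_m. set (X := psub q p). set (Y := rot _ X). clearbody Y. subst X.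
  apply pt_eq; unfold psub, padd, pscale; simpl; field. Qed.
Lemma alg3 p q : psub q (padd p (pscale (2/3) (psub q p))) = pscale (1/3) (psub q p).
Proof. apply pt_eq; unfold psub, padd, pscale; simpl; field. Qed.

Lemma fin a c th d0 : pscale (1/3) (rot a (pscale c (rot th d0))) = pscale (1/3 * c) (rot (a + th) d0).
Proof. rewrite rot_scale, rot_add. apply pt_eq; unfold pscale; simpl; ring. Qed.

Lemma inv v1 v2 v3 m : equilateral_ccw v1 v2 v3 ->
  length (Lm v1 v2 v3 m) = (3 * 4 ^ m)%nat /\
  forall e, (e < 3 * 4 ^ m)%nat ->
    psub (nth (nxt (3 * 4 ^ m) e) (Lm v1 v2 v3 m) (0,0)) (nth e (Lm v1 v2 v3 m) (0,0))
    = pscale ((1/3)^m) (rot (ang (dir m e)) (psub v2 v1)).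
Proof.
  intros [Hne Heq]. induction m as [|m [IHl IH]].
  - split; [reflexivity|]. intros e He. simpl in He.
    destruct v1 as [a1 b1], v2 as [a2 b2], v3 as [a3 b3].
    unfold psub, rot in Heq; simpl in Heq. injection Heq as H1 H2.
    destruct e as [|[|[|e]]]; try lia; unfold ang; simpl dir; simpl nth; simpl IZR.
    + rewrite Rmult_0_l, rot0. apply pt_eq; unfold pscale, psub; simpl; ring.
    + unfold rot; rewrite cos_23, sin_23. apply pt_eq; unfold s3, pscale, psub in *; simpl in *;
      rewrite cos_PI3 in *; lra.
    + unfold rot; rewrite cos_43, sin_43. apply pt_eq; unfold s3, pscale, psub in *; simpl in *;
      rewrite cos_PI3 in *; lra.
  - assert (HN : (0 < 3 * 4 ^ m)%nat) by (pose proof (Nat.pow_nonzero 4 m); lia).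
    change (Lm v1 v2 v3 (S m)) with (koch_step (Lm v1 v2 v3 m)).
    split. { rewrite ks_len, IHl. simpl; lia. }
    intros e He.
    pose proof (Nat.div_mod e 4 ltac:(lia)) as Hd.
    pose proof (Nat.mod_upper_bound e 4 ltac:(lia)) as Hb.
    remember (e / 4)%nat as i. remember (e mod 4)%nat as r.
    assert (Hi : (i < 3 * 4 ^ m)%nat) by (simpl in He; lia).
    subst e. rewrite dir_S. destruct (dm i r Hb) as [-> ->].
    specialize (IH i Hi).
    set (N := (3 * 4 ^ m)%nat) in *.
    replace (3 * 4 ^ S m)%nat with (4 * N)%nat by (unfold N; simpl; lia).
    assert (Hnx : forall r', (r' < 3)%nat -> nxt (4*N) (4*i+r') = (4*i + S r')%nat).
    { intros r' Hr'. unfold nxt. destruct (Nat.eqb_spec (S (4*i+r')) (4*N)); lia. }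
    assert (Hn3 : nxt (4*N) (4*i+3) = (4 * nxt N i + 0)%nat).
    { unfold nxt. destruct (Nat.eqb_spec (S (4*i+3)) (4*N)); destruct (Nat.eqb_spec (S i) N); lia. }
    assert (HnN : (nxt N i < N)%nat) by (unfold nxt; destruct (Nat.eqb_spec (S i) N); lia).
    destruct r as [|[|[|[|r]]]]; try lia.
    + rewrite Hnx by lia. rewrite !ks_nth by (rewrite ?IHl; lia). rewrite IHl. simpl nth.
      rewrite alg0, IH. replace (pscale (1/3) (pscale ((1/3)^m) (rot (ang (dir m i)) (psub v2 v1))))
        with (pscale (1/3) (rot 0 (pscale ((1/3)^m) (rot (ang (dir m i)) (psub v2 v1))))) by (rewrite rot0; auto).
      rewrite fin. unfold ang. f_equal. f_equal. rewrite plus_IZR. simpl. ring.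
    + rewrite Hnx by lia. rewrite !ks_nth by (rewrite ?IHl; lia). rewrite IHl. simpl nth.
      rewrite alg1, IH. rewrite fin. unfold ang. f_equal. f_equal. rewrite plus_IZR. simpl. ring.
    + rewrite Hnx by lia. rewrite !ks_nth by (rewrite ?IHl; lia). rewrite IHl. simpl nth.
      rewrite alg2, IH. rewrite fin. unfold ang. f_equal. f_equal. rewrite plus_IZR. simpl. ring.
    + rewrite Hn3. rewrite !ks_nth by (rewrite ?IHl; lia). rewrite IHl. simpl nth.
      rewrite alg3, IH. replace (pscale (1/3) (pscale ((1/3)^m) (rot (ang (dir m i)) (psub v2 v1))))
        with (pscale (1/3) (rot 0 (pscale ((1/3)^m) (rot (ang (dir m i)) (psub v2 v1))))) by (rewrite rot0; auto).
      rewrite fin. unfold ang. f_equal. f_equal. rewrite plus_IZR. simpl. ring.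
Qed.

Definition idx (N : nat) (k : Z) : nat := Z.to_nat ((k - 1) mod Z.of_nat N).

Lemma idx_lt N k : (0 < N)%nat -> (idx N k < N)%nat.
Proof. intros H. unfold idx. pose proof (Z.mod_pos_bound (k-1) (Z.of_nat N) ltac:(lia)). lia. Qed.

Lemma idx_succ N k : (0 < N)%nat -> idx N (k+1) = nxt N (idx N k).
Proof.
  intros H. unfold idx, nxt.
  pose proof (Z.mod_pos_bound (k-1) (Z.of_nat N) ltac:(lia)) as Hb.
  replace (k + 1 - 1)%Z with ((k - 1) + 1)%Z by ring.
  rewrite <- Z.add_mod_idemp_l by lia.
  set (z := ((k - 1) mod Z.of_nat N)%Z) in *.
  destruct (Nat.eqb_spec (S (Z.to_nat z)) N) as [E|E].
  - replace (z + 1)%Z with (Z.of_nat N) by lia. rewrite Z_mod_same_full. reflexivity.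
  - rewrite Z.mod_small by lia. lia.
Qed.

Lemma idx_val N M : (1 <= M <= N)%nat -> idx N (Z.of_nat M) = (M - 1)%nat.
Proof. intros H. unfold idx. rewrite Z.mod_small by lia. lia. Qed.

Lemma idx_0 N : (0 < N)%nat -> idx N 0 = (N - 1)%nat.
Proof. intros H. unfold idx.
  replace ((0 - 1) mod Z.of_nat N)%Z with (Z.of_nat N - 1)%Z. lia.
  apply (Z.mod_unique _ _ (-1)); lia. Qed.

Lemma vert_eq v1 v2 v3 m i : equilateral_ccw v1 v2 v3 ->
  vert v1 v2 v3 (S m) i = nth (idx (3 * 4 ^ m) i) (Lm v1 v2 v3 m) (0,0).
Proof. intros He. unfold vert. change (snowflake v1 v2 v3 (S m)) with (Lm v1 v2 v3 m).
  destruct (inv v1 v2 v3 m He) as [-> _]. reflexivity. Qed.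

Lemma Npos3 m : (0 < 3 * 4 ^ m)%nat.
Proof. pose proof (Nat.pow_nonzero 4 m); lia. Qed.

Definition beta m k := ang (dir m (idx (3 * 4 ^ m) k)).

Lemma Xeq v1 v2 v3 m k : equilateral_ccw v1 v2 v3 ->
  psub (vert v1 v2 v3 (S m) (k+1)) (vert v1 v2 v3 (S m) k)
  = pscale ((1/3)^m) (rot (beta m k) (psub v2 v1)).
Proof.
  intros He. rewrite !vert_eq by auto. rewrite idx_succ by apply Npos3.
  destruct (inv v1 v2 v3 m He) as [_ H]. apply H. apply idx_lt, Npos3.
Qed.

Lemma turnT m k :
  sin (beta m k - beta m (k-1)) = (if sh m (idx (3*4^m) k) then s3 else - s3) /\
  cos (beta m k - beta m (k-1)) = (if sh m (idx (3*4^m) k) then -1/2 else 1/2).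
Proof.
  unfold beta. pose proof (Npos3 m) as HN.
  assert (Hk : idx (3*4^m) k = nxt (3*4^m) (idx (3*4^m) (k-1))).
  { rewrite <- idx_succ by auto. f_equal. ring. }
  rewrite Hk. pose proof (idx_lt _ (k-1) HN) as Hl.
  set (e := idx (3*4^m) (k-1)) in *. unfold nxt.
  destruct (Nat.eqb_spec (S e) (3*4^m)) as [E|E].
  - replace e with (3*4^m-1)%nat by lia. rewrite dir0, dir_last, sh0. unfold ang. simpl IZR.
    replace (0 * (PI/3) - 4 * (PI/3)) with (-4 * (PI/3)) by ring.
    rewrite sin_m43, cos_m43. auto.
  - unfold ang. rewrite <- Rmult_minus_distr_r, <- minus_IZR, turn.
    destruct (sh m (S e)); simpl IZR.
    + rewrite sin_23, cos_23; auto.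
    + rewrite sin_m13', cos_m13'; auto.
Qed.

Lemma D2pos (a b : pt) : a <> b -> 0 < dot (psub b a) (psub b a).
Proof. intros H. destruct a as [x y], b as [u v]; unfold dot, psub; simpl.
  destruct (Req_dec x u); destruct (Req_dec y v); subst; try (exfalso; auto; fail); nra. Qed.

Definition sgn (b : bool) : R := if b then 1 else -1.

Lemma crossP v1 v2 v3 m a11 a12 a21 a22 b1 b2 a b : equilateral_ccw v1 v2 v3 ->
  cross (tvec (fun i => affine_map a11 a12 a21 a22 b1 b2 (vert v1 v2 v3 (S m) i)) a)
        (tvec (fun i => affine_map a11 a12 a21 a22 b1 b2 (vert v1 v2 v3 (S m) i)) b)
  = (a11 * a22 - a12 * a21) * ((1/3)^m * (1/3)^m * (sin (beta m b - beta m a) * dot (psub v2 v1) (psub v2 v1))).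
Proof.
  intros He. rewrite <- cross_rot, <- cross_scale, <- !(Xeq v1 v2 v3 m) by auto. unfold tvec.
  generalize (vert v1 v2 v3 (S m) (a+1)) (vert v1 v2 v3 (S m) a) (vert v1 v2 v3 (S m) (b+1)) (vert v1 v2 v3 (S m) b).
  intros [x1 y1] [x2 y2] [x3 y3] [x4 y4]. unfold cross, psub, affine_map; simpl; ring.
Qed.

Lemma kapfacts v1 v2 v3 m a11 a12 a21 a22 b1 b2 k : equilateral_ccw v1 v2 v3 ->
  a11 * a22 - a12 * a21 <> 0 ->
  let P := fun i => affine_map a11 a12 a21 a22 b1 b2 (vert v1 v2 v3 (S m) i) in
  let sA := sgn (sh m (idx (3*4^m) k)) in
  let sB := sgn (sh m (idx (3*4^m) (k+1))) in
  kappa_defined P k /\ kappa P k = sB / sA /\ kappabar P k = - sB.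
Proof.
  intros He Hdet P sA sB.
  assert (HD : 0 < dot (psub v2 v1) (psub v2 v1)) by (apply D2pos; destruct He; auto).
  assert (Hc : 0 < (1/3)^m) by (apply pow_lt; lra).
  pose proof s3_pos as Hs.
  destruct (turnT m k) as [Sk Ck]. destruct (turnT m (k+1)) as [Sk1 Ck1].
  replace (k + 1 - 1)%Z with k in Sk1, Ck1 by ring.
  unfold kappa_defined, kappa, kappabar, P. rewrite !crossP by auto.
  replace (beta m (k + 1) - beta m (k - 1)) with ((beta m (k+1) - beta m k) + (beta m k - beta m (k-1))) by ring.
  rewrite sin_plus, Sk, Ck, Sk1, Ck1. unfold sA, sB, sgn.
  destruct (sh m (idx (3 * 4 ^ m) k)), (sh m (idx (3 * 4 ^ m) (k+1))); repeat split;
    try (apply Rmult_integral_contrapositive; split; [auto|];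
         apply Rmult_integral_contrapositive; split; [nra|]; nra);
    field; repeat split; try lra; nra.
Qed.

Lemma sharp_iff v1 v2 v3 m k : equilateral_ccw v1 v2 v3 ->
  (sharp_point v1 v2 v3 (S m) k <-> sh m (idx (3*4^m) k) = true).
Proof.
  intros He. unfold sharp_point, angle.
  assert (HD : 0 < dot (psub v2 v1) (psub v2 v1)) by (apply D2pos; destruct He; auto).
  assert (Hc : 0 < (1/3)^m) by (apply pow_lt; lra).
  assert (E1 : psub (vert v1 v2 v3 (S m) (k - 1)) (vert v1 v2 v3 (S m) k)
     = pscale (-1) (pscale ((1/3)^m) (rot (beta m (k-1)) (psub v2 v1)))).
  { rewrite <- (Xeq v1 v2 v3 m) by auto. replace (k - 1 + 1)%Z with k by ring.
    generalize (vert v1 v2 v3 (S m) (k - 1)) (vert v1 v2 v3 (S m) k). intros [] []; unfold psub, pscale; simpl; f_equal; ring. }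
  rewrite E1, Xeq by auto. unfold pnorm.
  assert (Hdd : forall th s, dot (pscale s (pscale ((1/3)^m) (rot th (psub v2 v1))))
     (pscale s (pscale ((1/3)^m) (rot th (psub v2 v1)))) = s*s*((1/3)^m*(1/3)^m * dot (psub v2 v1) (psub v2 v1))).
  { intros th s. rewrite !dot_scale, dot_rot. replace (th - th) with 0 by ring. rewrite cos_0. ring. }
  replace (pscale ((1/3)^m) (rot (beta m k) (psub v2 v1))) with (pscale 1 (pscale ((1/3)^m) (rot (beta m k) (psub v2 v1))))
    at 2 3 by (apply pt_eq; unfold pscale; simpl; ring).
  rewrite !Hdd.
  set (Q := (1/3)^m*(1/3)^m * dot (psub v2 v1) (psub v2 v1)).
  assert (HQ : 0 < Q) by (unfold Q; apply Rmult_lt_0_compat; [apply Rmult_lt_0_compat|]; auto).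
  replace (dot (pscale (-1) (pscale ((1 / 3) ^ m) (rot (beta m (k - 1)) (psub v2 v1))))
       (pscale ((1 / 3) ^ m) (rot (beta m k) (psub v2 v1))))
   with (- ((1/3)^m*(1/3)^m * (cos (beta m k - beta m (k-1)) * dot (psub v2 v1) (psub v2 v1)))).
  2:{ rewrite <- dot_rot, <- dot_scale. unfold dot, pscale; simpl; ring. }
  destruct (turnT m k) as [_ Ck]. rewrite Ck.
  replace (-1 * -1 * Q) with Q by ring. replace (1 * 1 * Q) with Q by ring.
  rewrite sqrt_sqrt by lra.
  destruct (sh m (idx (3 * 4 ^ m) k)).
  - split; auto. intros _. replace (- ((1 / 3) ^ m * (1 / 3) ^ m * (-1 / 2 * dot (psub v2 v1) (psub v2 v1))) / Q)
      with (cos (PI/3)) by (rewrite cos_PI3; unfold Q; field; lra).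
    apply acos_cos. pose proof PI_RGT_0; lra.
  - split; [|discriminate]. intros H. exfalso.
    replace (- ((1 / 3) ^ m * (1 / 3) ^ m * (1 / 2 * dot (psub v2 v1) (psub v2 v1))) / Q)
      with (cos (2 * (PI/3))) in H by (rewrite cos_23; unfold Q; field; lra).
    rewrite acos_cos in H. pose proof PI_RGT_0; lra. pose proof PI_RGT_0; lra.
Qed.

Lemma pow4pos m : (0 < 4 ^ m)%nat.
Proof. pose proof (Nat.pow_nonzero 4 m); lia. Qed.

Lemma shA m : forall e, (e < 3 * 4 ^ m)%nat ->
  (sh m e = true <->
   (exists l k, (l < m)%nat /\ (1 <= k <= 3 * 4 ^ (m - 1 - l))%nat /\ e = (4 ^ l * (4 * k - 2))%nat)
   \/ (exists k, (1 <= k <= 3)%nat /\ e = (4 ^ m * (k - 1))%nat)).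
Proof.
  induction m as [|m IH]; intros e He.
  - simpl in *. split; [|reflexivity]. intros _. right. exists (S e). split; lia.
  - pose proof (Nat.div_mod e 4 ltac:(lia)) as Hd.
    pose proof (Nat.mod_upper_bound e 4 ltac:(lia)) as Hb.
    pose proof (pow4pos m) as Hp.
    rewrite sh_S. remember (e / 4)%nat as q. remember (e mod 4)%nat as r.
    assert (Hq : (q < 3 * 4 ^ m)%nat) by (simpl in He; lia).
    replace (S m - 1)%nat with m by lia.
    destruct r as [|[|[|[|r]]]]; try lia.
    + rewrite (IH q Hq). split.
      * intros [[l [k [Hl [Hk Hq']]]]|[k [Hk Hq']]].
        -- left. exists (S l), k. replace (m - S l)%nat with (m - 1 - l)%nat by lia.
           split; [lia|]. split; [auto|]. rewrite Nat.pow_succ_r', <- Nat.mul_assoc. lia.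
        -- right. exists k. split; auto. rewrite Nat.pow_succ_r', <- Nat.mul_assoc. lia.
      * intros [[l [k [Hl [Hk He']]]]|[k [Hk He']]].
        -- destruct l as [|l].
           ++ simpl in He'. lia.
           ++ left. exists l, k. replace (m - S l)%nat with (m - 1 - l)%nat in Hk by lia.
              split; [lia|]. split; [auto|]. rewrite Nat.pow_succ_r', <- Nat.mul_assoc in He'. lia.
        -- right. exists k. split; auto. rewrite Nat.pow_succ_r', <- Nat.mul_assoc in He'. lia.
    + split; [discriminate|]. intros [[l [k [Hl [Hk He']]]]|[k [Hk He']]].
      * destruct l as [|l]; [simpl in He'; lia|]. rewrite Nat.pow_succ_r', <- Nat.mul_assoc in He'. lia.
      * rewrite Nat.pow_succ_r', <- Nat.mul_assoc in He'. lia.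
    + split; [|reflexivity]. intros _. left. exists 0%nat, (S q). rewrite Nat.sub_0_r. simpl Nat.pow. split; [lia|]. split; lia.
    + split; [discriminate|]. intros [[l [k [Hl [Hk He']]]]|[k [Hk He']]].
      * destruct l as [|l]; [simpl in He'; lia|]. rewrite Nat.pow_succ_r', <- Nat.mul_assoc in He'. lia.
      * rewrite Nat.pow_succ_r', <- Nat.mul_assoc in He'. lia.
Qed.

Lemma sharpb_iff v1 v2 v3 n i : sharpb v1 v2 v3 n i = true <-> sharp_point v1 v2 v3 n i.
Proof. unfold sharpb, sharp_point. destruct Req_EM_T; split; auto; discriminate. Qed.

Lemma code_eq v1 v2 v3 m : equilateral_ccw v1 v2 v3 -> (1 <= m)%nat ->
  code v1 v2 v3 (S m) = map (fun j => sh m (2 * j - 2)) (seq 1 (6 * 4 ^ (m - 1))).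
Proof.
  intros He Hm. unfold code. apply map_ext_in. intros j Hj. apply in_seq in Hj.
  assert (H4 : (6 * 4 ^ (m-1) * 2 = 3 * 4 ^ m)%nat).
  { destruct m; [lia|]. rewrite Nat.pow_succ_r'. simpl. rewrite Nat.sub_0_r. lia. }
  replace (2 * Z.of_nat j - 1)%Z with (Z.of_nat (2 * j - 1)) by lia.
  apply Bool.eq_iff_eq_true. rewrite sharpb_iff, sharp_iff by auto.
  rewrite idx_val by lia. replace (2 * j - 1 - 1)%nat with (2 * j - 2)%nat by lia. tauto.
Qed.

Lemma nth_map_seq (f : nat -> bool) L j : (1 <= j <= L)%nat -> nth (j - 1) (map f (seq 1 L)) false = f j.
Proof.
  intros H. rewrite nth_indep with (d' := f 0%nat) by (rewrite length_map, length_seq; lia).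
  rewrite map_nth, seq_nth by lia. f_equal. lia.
Qed.

Lemma code_rec m K : (1 <= m)%nat ->
  map (fun j => sh (S m) (2 * j - 2)) (seq 1 (4 * K)) =
  flat_map (fun c => [c; true; false; true]) (map (fun j => sh m (2 * j - 2)) (seq 1 K)).
Proof.
  intros Hm. induction K as [|K IH]; [reflexivity|].
  replace (4 * S K)%nat with (4 * K + 4)%nat by lia. replace (S K) with (K + 1)%nat by lia.
  rewrite !seq_app, !map_app, flat_map_app, IH. f_equal.
  cbn [seq map flat_map app]. destruct m as [|m']; [lia|].
  assert (E : forall x r, (r < 4)%nat -> sh (S (S m')) (4 * x + r) = match r with 0%nat => sh (S m') x | 2%nat => true | _ => false end).
  { intros x r Hr. rewrite sh_S. destruct (dm x r Hr) as [-> ->]. reflexivity. }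
  replace (2 * (1 + 4 * K) - 2)%nat with (4 * (2 * K) + 0)%nat by lia.
  replace (2 * S (1 + 4 * K) - 2)%nat with (4 * (2 * K) + 2)%nat by lia.
  replace (2 * S (S (1 + 4 * K)) - 2)%nat with (4 * (2 * K + 1) + 0)%nat by lia.
  replace (2 * S (S (S (1 + 4 * K))) - 2)%nat with (4 * (2 * K + 1) + 2)%nat by lia.
  rewrite !E by lia. rewrite sh_odd.
  replace (2 * (1 + K) - 2)%nat with (2 * K)%nat by lia. reflexivity.
Qed.

Theorem mainTheorem6 (v1 v2 v3 : pt) (n : nat) :
  equilateral_ccw v1 v2 v3 -> (2 <= n)%nat ->
  (* (i) *)
  (forall m : nat, (1 <= m <= 3 * 4 ^ (n - 1))%nat ->
     (sharp_point v1 v2 v3 n (Z.of_nat m) <->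
       ((exists l k : nat, (l <= n - 2)%nat /\ (1 <= k <= 3 * 4 ^ (n - 2 - l))%nat /\
            m = (4 ^ l * (4 * k - 2) + 1)%nat)
        \/ (exists k : nat, (1 <= k <= 3)%nat /\ m = (4 ^ (n - 1) * (k - 1) + 1)%nat)))) /\
  (* (ii) *)
  (forall (a11 a12 a21 a22 b1 b2 : R), a11 * a22 - a12 * a21 <> 0 ->
     let P := fun i : Z => affine_map a11 a12 a21 a22 b1 b2 (vert v1 v2 v3 n i) in
     (forall j : nat, (1 <= j <= 6 * 4 ^ (n - 2))%nat ->
        let k1 := (2 * Z.of_nat j - 2)%Z in
        let k2 := (2 * Z.of_nat j - 1)%Z in
        (nth (j - 1) (code v1 v2 v3 n) false = true ->
           kappa_defined P k1 /\ kappa_defined P k2 /\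
           kappa P k1 = -1 /\ kappa P k2 = -1 /\
           kappabar P k1 = -1 /\ kappabar P k2 = 1) /\
        (nth (j - 1) (code v1 v2 v3 n) false = false ->
           kappa_defined P k1 /\ kappa_defined P k2 /\
           kappa P k1 = 1 /\ kappa P k2 = 1 /\
           kappabar P k1 = 1 /\ kappabar P k2 = 1))) /\
  (* (iii) *)
  code v1 v2 v3 2 = [true; true; true; true; true; true] /\
  code v1 v2 v3 (S n) = flat_map (fun c => [c; true; false; true]) (code v1 v2 v3 n) /\
  code v1 v2 v3 3 = repeat_word [true; true; false; true] 6 /\
  length (code v1 v2 v3 n) = (6 * 4 ^ (n - 2))%nat.
Proof.
  intros He Hn. destruct n as [|m]; [lia|].
  assert (Hm : (1 <= m)%nat) by lia.
  replace (S m - 1)%nat with m by lia.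
  change (S m - 2)%nat with (m - 1)%nat.
  assert (H4 : (6 * 4 ^ (m-1) * 2 = 3 * 4 ^ m)%nat).
  { destruct m; [lia|]. rewrite Nat.pow_succ_r'. simpl. rewrite Nat.sub_0_r. lia. }
  split; [|split; [|split; [|split; [|split]]]].
  -
    intros M HM. rewrite sharp_iff by auto. rewrite idx_val by lia.
    rewrite shA by lia. split.
    + intros [[l [k [Hl [Hk HE]]]]|[k [Hk HE]]].
      * left. exists l, k. split; [lia|]. split; [auto|]. lia.
      * right. exists k. split; [auto|]. lia.
    + intros [[l [k [Hl [Hk HE]]]]|[k [Hk HE]]].
      * left. exists l, k. split; [lia|]. split; [auto|]. lia.
      * right. exists k. split; [auto|]. lia.
  -
    intros a11 a12 a21 a22 b1 b2 Hdet P j Hj k1 k2.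
    rewrite (code_eq v1 v2 v3 m He Hm), nth_map_seq by lia.
    pose proof (Npos3 m) as HN.
    destruct m as [|m']; [lia|].
    assert (I1 : sh (S m') (idx (3 * 4 ^ S m') k1) = false).
    { unfold k1. destruct (Nat.eq_dec j 1) as [->|Hj1].
      - replace (2 * Z.of_nat 1 - 2)%Z with 0%Z by lia. rewrite idx_0 by lia.
        replace (3 * 4 ^ S m' - 1)%nat with (2 * (6 * 4 ^ m' - 1) + 1)%nat
          by (rewrite Nat.pow_succ_r'; pose proof (pow4pos m'); lia).
        apply sh_odd.
      - replace (2 * Z.of_nat j - 2)%Z with (Z.of_nat (2 * j - 2)) by lia.
        rewrite idx_val by lia. replace (2 * j - 2 - 1)%nat with (2 * (j - 2) + 1)%nat by lia.
        apply sh_odd. }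
    assert (I2 : idx (3 * 4 ^ S m') k2 = (2 * j - 2)%nat).
    { unfold k2. replace (2 * Z.of_nat j - 1)%Z with (Z.of_nat (2 * j - 1)) by lia.
      rewrite idx_val by lia. lia. }
    assert (I3 : sh (S m') (idx (3 * 4 ^ S m') (k2 + 1)) = false).
    { unfold k2. replace (2 * Z.of_nat j - 1 + 1)%Z with (Z.of_nat (2 * j)) by lia.
      rewrite idx_val by lia. replace (2 * j - 1)%nat with (2 * (j - 1) + 1)%nat by lia.
      apply sh_odd. }
    assert (Hk : (k1 + 1 = k2)%Z) by (unfold k1, k2; lia).
    destruct (kapfacts v1 v2 v3 (S m') a11 a12 a21 a22 b1 b2 k1 He Hdet) as [D1 [K1 B1]].
    destruct (kapfacts v1 v2 v3 (S m') a11 a12 a21 a22 b1 b2 k2 He Hdet) as [D2 [K2 B2]].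
    cbv zeta in D1, K1, B1, D2, K2, B2. subst P. rewrite Hk in K1, B1.
    rewrite I1 in K1. rewrite I3 in K2, B2. rewrite I2 in K1, B1, K2.
    unfold sgn in *. destruct (sh (S m') (2 * j - 2)); split; intros Hc; try discriminate;
      repeat split; auto.
    all: first [rewrite K1 | rewrite K2 | rewrite B1 | rewrite B2]; first [lra | field].
  - rewrite (code_eq v1 v2 v3 1 He) by lia. reflexivity.
  - rewrite (code_eq v1 v2 v3 (S m) He) by lia. rewrite (code_eq v1 v2 v3 m He Hm).
    replace (S m - 1)%nat with m by lia.
    replace (6 * 4 ^ m)%nat with (4 * (6 * 4 ^ (m - 1)))%nat by lia.
    apply code_rec; auto.
  - rewrite (code_eq v1 v2 v3 2 He) by lia. reflexivity.
  - rewrite (code_eq v1 v2 v3 m He Hm), length_map, length_seq. reflexivity.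
Qed.
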